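(* Let $D$ be a positive integer that is not a sum of two integer squares, and let $\mathcal{C}$ be one of the following circles: $\mathcal{C}_D: |z|^2-D=0$; $\mathcal{C}_{D,1}: 2|z|^2+z+\bar z-\frac{D-1}{2}=0$ (when $D\equiv1\pmod4$); $\mathcal{C}_{D,2}: 2|z|^2+iz-i\bar z-\frac{D-1}{2}=0$ (when $D\equiv1\pmod4$); $\mathcal{C}_{D,3}: 2|z|^2+(1+i)z+(1-i)\bar z-\frac{D-2}{2}=0$ (when $D\equiv2\pmod4$). Then the image of $\mathcal{C}$ under $z\mapsto z+1$ (i.e. under $\begin{pmatrix}1&1\\0&1\end{pmatrix}$) intersects $\mathcal{C}$ nontrivially.
   Context: ''Intersect nontrivially'' means the two circles cross, i.e. meet in exactly two points. *)

(* Defs.v *)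
(* circles in the complex plane R[i] over a real closed field R
   (R = the real numbers is the case of the paper; statement is for every rcfType). *)
From HB Require Import structures.
From mathcomp Require Import all_boot all_order all_algebra.
From mathcomp Require Import complex.
Unset Printing Implicit Defensive.
Import Order.TTheory GRing.Theory Num.Theory.
Local Open Scope ring_scope.
Local Open Scope complex_scope.

Inductive circle_kind := C_D | C_D1 | C_D2 | C_D3.

Definition admissible (D : nat) (k : circle_kind) : Prop :=
  match k with
  | C_D => True
  | C_D1 => (D %% 4 = 1)%N
  | C_D2 => (D %% 4 = 1)%N
  | C_D3 => (D %% 4 = 2)%N
  end.

Definition on_circle (R : rcfType) (D : nat) (k : circle_kind) (z : R[i]) : Prop :=
  match k with
  | C_D => z * z^* - (D%:R : R)%:C = 0
  | C_D1 => 2 * (z * z^*) + z + z^* - (((D%:R - 1) / 2 : R))%:C = 0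
  | C_D2 => 2 * (z * z^*) + 'i * z - 'i * z^* - (((D%:R - 1) / 2 : R))%:C = 0
  | C_D3 => 2 * (z * z^*) + (1 + 'i) * z + (1 - 'i) * z^*
              - (((D%:R - 2) / 2 : R))%:C = 0
  end.

Definition on_translate (R : rcfType) (D : nat) (k : circle_kind) (w : R[i]) : Prop :=
  exists2 z, on_circle R D k z & w = z + 1.

(* Two sets of points intersect nontrivially: they meet in exactly two points. *)
Definition meet_in_exactly_two {R : rcfType} (P Q : R[i] -> Prop) : Prop :=
  exists z1 z2 : R[i], z1 <> z2 /\
    forall z, (P z /\ Q z) <-> (z = z1 \/ z = z2).

(* Main.v *)
Require Import Defs.
From mathcomp Require Import all_boot all_order all_algebra.
From mathcomp Require Import complex.
From mathcomp Require Import ring lra.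
Import Order.TTheory GRing.Theory Num.Theory.

Section Aux.
Local Open Scope ring_scope.
Local Open Scope complex_scope.
Variable R : rcfType.
Variable D : nat.

Definition P (k : circle_kind) (a b : R) : R :=
  match k with
  | C_D => a * a + b * b - D%:R
  | C_D1 => 2 * (a * a + b * b) + 2 * a - (D%:R - 1) / 2
  | C_D2 => 2 * (a * a + b * b) - 2 * b - (D%:R - 1) / 2
  | C_D3 => 2 * (a * a + b * b) + 2 * a - 2 * b - (D%:R - 2) / 2
  end.

Lemma circ_iff k a b : on_circle R D k (a +i* b) <-> P k a b = 0.
Proof.
case: k; rewrite /on_circle /P; split.
all: try (move/eqP; rewrite eq_complex /= => /andP[/eqP H _]; rewrite -H; ring).
all: move=> H; apply/eqP; rewrite eq_complex /=; apply/andP; split; apply/eqP;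
  [rewrite -H; ring | ring].
Qed.

Definition x0 k : R := match k with C_D | C_D2 => 1/2 | _ => 0 end.
Definition cc k : R := match k with C_D | C_D1 => 0 | _ => 1/2 end.
Definition rr k : R := match k with C_D => D%:R - 1/4 | _ => (D%:R - 1)/4 end.

Lemma key k a b : (P k (a - 1) b = 0 /\ P k a b = 0) <->
  (a = x0 k /\ (b - cc k) ^+ 2 = rr k).
Proof.
case: k; rewrite /P /x0 /cc /rr; split.
- case=> H1 H2; have Ea : a = 1/2 by lra.
  by split=> //; rewrite Ea in H2; rewrite expr2; lra.
- case=> -> H; rewrite expr2 in H; split; lra.
- case=> H1 H2; have Ea : a = 0 by lra.
  by split=> //; rewrite Ea in H2; rewrite expr2; lra.
- case=> -> H; rewrite expr2 in H; split; lra.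
- case=> H1 H2; have Ea : a = 1/2 by lra.
  by split=> //; rewrite Ea in H2; rewrite expr2; lra.
- case=> -> H; rewrite expr2 in H; split; lra.
- case=> H1 H2; have Ea : a = 0 by lra.
  by split=> //; rewrite Ea in H2; rewrite expr2; lra.
- case=> -> H; rewrite expr2 in H; split; lra.
Qed.
End Aux.

Theorem lemma7p3 (R : rcfType) (D : nat) (k : circle_kind) :
  (0 < D)%N ->
  ~ (exists a b : int, (D%:Z = a ^+ 2 + b ^+ 2)%R) ->
  admissible D k ->
  meet_in_exactly_two (on_translate R D k) (on_circle R D k).
Proof.
move=> D0 nsq _.
have D2 : (2 <= D)%N.
  case: D D0 nsq => [|[|n]] //= _ nsq; exfalso; apply: nsq; by exists 1, 0.
have rpos : (0 < rr R D k)%R.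
  have : ((2%:R : R) <= D%:R)%R by rewrite ler_nat.
  by case: k => /= H; lra.
set s := Num.sqrt (rr R D k).
have spos : (0 < s)%R by rewrite sqrtr_gt0.
have ss : (s ^+ 2 = rr R D k)%R by rewrite sqr_sqrtr // ltW.
exists (x0 R k +i* (cc R k + s)%R)%C, (x0 R k +i* (cc R k - s)%R)%C; split.
  by case=> E; lra.
case=> a b.
have Tr : on_translate R D k (a +i* b)%C <-> on_circle R D k ((a - 1)%R +i* b)%C.
  split.
    case=> z Hz E; suff -> : (((a - 1)%R +i* b)%C = z) by [].
    rewrite -(addrK 1%R z) -E.
    apply/eqP; rewrite eq_complex /=; apply/andP; split; apply/eqP; ring.
  move=> H; exists ((a - 1)%R +i* b)%C => //.
  apply/eqP; rewrite eq_complex /=; apply/andP; split; apply/eqP; ring.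
rewrite Tr !circ_iff key; split.
  case=> -> H.
  have : ((b - cc R k - s) * (b - cc R k + s) = 0)%R.
    by rewrite -ss expr2 in H *; lra.
  move/eqP; rewrite mulf_eq0 => /orP[] /eqP E; [left|right]; congr (Complex _ _); lra.
case=> -[-> ->]; split=> //; rewrite -ss; rewrite !expr2; ring.
Qed.
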